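(* Let $q$ be a prime power, $\mathbb{F}$ an extension field of $\mathbb{F}_q$, $1\le k\le n$, $\ell\ge1$. Let $C$ be an $[n,k]_{\mathbb{F}}$ code that is $\mathrm{GKP}(\ell)$, with generator matrix $G\in\mathbb{F}^{k\times n}$. Let $V_1,\dots,V_\ell$ be $\mathbb{F}_q$-subspaces of $\mathbb{F}_q^n$, each of dimension at most $k$. Then \[ \dim_{\mathbb{F}}\Big(\bigcap_{i\in[\ell]}G_{V_i}\Big)=\max_{P_1\sqcup\cdots\sqcup P_s=[\ell]}\Big(\sum_{i\in[s]}\dim_{\mathbb{F}_q}\Big(\bigcap_{j\in P_i}V_j\Big)-(s-1)k\Big), \] the maximum being over all partitions of $[\ell]$ into nonempty parts.
   Context: An $[n,k]_{\mathbb{F}}$ code is a $k$-dimensional subspace $C\subseteq\mathbb{F}^n$; $G$ is a generator matrix if $C=\{G^T\bm{u}\}$. For an $\mathbb{F}_q$-subspace $V\subseteq\mathbb{F}_q^n$, $G_V\subseteq\mathbb{F}^k$ is the $\mathbb{F}$-column span of $GA$ for any $A\in\mathbb{F}_q^{n\times\dim V}$ with $\mathbb{F}_q$-column span $V$. $C$ is MRD if every nonzero codeword $\bm{v}$ satisfies $\dim_{\mathbb{F}_q}\mathrm{span}_{\mathbb{F}_q}\{v_1,\dots,v_n\}\ge n-k+1$. A kernel pattern $(V_1,\dots,V_k)$ (subspaces of $\mathbb{F}_q^n$) is generic if $\dim(\bigcap_{i\in\Omega}V_i)\le k-|\Omega|$ for all nonempty $\Omega\subseteq[k]$, and has order $\ell$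 if exactly $\ell$ distinct nonzero subspaces occur among them; $C$ attains it if for full-rank $A_i$ with column span $V_i$ there is an invertible $M$ with rows $\bm{m}_i$ and $\bm{m}_iGA_i=0$ for all $i$. $C$ is $\mathrm{GKP}(\ell)$ if it is MRD and attains all generic kernel patterns of order at most $\ell$. *)

(* Defs.v *)
From HB Require Import structures.
From mathcomp Require Import all_boot all_order all_algebra.
Set Implicit Arguments. Unset Strict Implicit. Unset Printing Implicit Defensive.
Import Order.TTheory GRing.Theory Num.Theory.
Local Open Scope ring_scope.

Section Codes.
(* K plays the role of F_q (a finite field); F is an extension field of K,
   given through the field embedding iota : K -> F. *)
Variables (K : finFieldType) (F : fieldType) (iota : {rmorphism K -> F}).
Variables (n k : nat).

Definition Fq_indep (S : {set 'I_n}) (v : 'rV[F]_n) : Prop :=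
  forall a : 'I_n -> K,
    \sum_(i in S) iota (a i) * v 0 i = 0 -> forall i, i \in S -> a i = 0.

(* dim_{F_q} span_{F_q}{v_1,..,v_n} >= d  iff some d of the entries are
   F_q-linearly independent. *)
Definition Fq_rank_ge (v : 'rV[F]_n) (d : nat) : Prop :=
  exists S : {set 'I_n}, (d <= #|S|)%N /\ Fq_indep S v.

(* The code C = { u G } (row convention) generated by G : 'M_(k,n) is MRD. *)
Definition MRD (G : 'M[F]_(k, n)) : Prop :=
  forall u : 'rV[F]_k, u *m G != 0 -> Fq_rank_ge (u *m G) (n - k + 1).

(* G_V : subspace of F^k spanned by the columns of G A, where the columns of
   A span V; here V (a subspace of F_q^n) is the row space of B, and G_V is
   returned as the row space of (G A)^T = iota(B) G^T. *)
Definition GV (G : 'M[F]_(k, n)) (B : 'M[K]_n) : 'M[F]_(n, k) :=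
  map_mx iota B *m G^T.

Definition generic_pattern (V : 'I_k -> 'M[K]_n) : Prop :=
  forall Om : {set 'I_k}, Om != set0 ->
    (\rank (\bigcap_(i in Om) V i)%MS <= k - #|Om|)%N.

Definition pattern_order (V : 'I_k -> 'M[K]_n) : nat :=
  #|[set <<V i>>%MS | i in [set i : 'I_k | V i != 0]]|.

(* C attains the pattern: there is an invertible M with rows m_i such that
   m_i G A_i = 0, where the columns of A_i span V_i (the condition only
   depends on the column span of A_i; we use the rows of V i as spanning
   vectors). *)
Definition attains (G : 'M[F]_(k, n)) (V : 'I_k -> 'M[K]_n) : Prop :=
  exists M : 'M[F]_k, M \in unitmx /\
    forall i : 'I_k, row i M *m G *m (map_mx iota (V i))^T = 0.

Definition GKP (l : nat) (G : 'M[F]_(k, n)) : Prop :=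
  MRD G /\
  forall V : 'I_k -> 'M[K]_n,
    generic_pattern V -> (pattern_order V <= l)%N -> attains G V.

End Codes.

Definition partition_value (K : finFieldType) (n k l : nat)
  (V : 'I_l -> 'M[K]_n) (P : {set {set 'I_l}}) : int :=
  (\sum_(B in P) (\rank (\bigcap_(j in B) V j)%MS)%:Z) - (#|P|%:Z - 1) * k%:Z.

(* Main.v *)
Require Import Defs.
From HB Require Import structures.
From mathcomp Require Import all_boot all_order all_algebra zify.
Set Implicit Arguments. Unset Strict Implicit. Unset Printing Implicit Defensive.

Section Comb.
Variables (l k : nat) (g : {set 'I_l} -> nat).
Hypothesis gk : forall S, S != set0 -> g S <= k.
Let set10 (i : 'I_l) : [set i] != set0. Proof. by apply/set0Pn; exists i; rewrite inE. Qed.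
Hypothesis gsup : forall S T, S :&: T != set0 -> g S + g T <= g (S :|: T) + g (S :&: T).

Lemma sum_setUI (c : 'I_l -> nat) (S T : {set 'I_l}) :
  \sum_(i in S :|: T) c i + \sum_(i in S :&: T) c i = \sum_(i in S) c i + \sum_(i in T) c i.
Proof.
rewrite !(big_mkcond (fun i => i \in _)) -!big_split /=; apply: eq_bigr => i _.
rewrite !inE; case: (i \in S); case: (i \in T) => //=; lia.
Qed.

Definition feas (c : {ffun 'I_l -> 'I_k.+1}) :=
  [forall S : {set 'I_l}, (S != set0) ==> (\sum_(i in S) c i + g S <= k)].

Lemma comb : exists (c : 'I_l -> nat) (P : {set {set 'I_l}}),
  [/\ partition P [set: 'I_l],
      forall S, S != set0 -> \sum_(i in S) c i + g S <= k &
      forall B, B \in P -> \sum_(i in B) c i + g B = k].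
Proof.
pose c0 : {ffun 'I_l -> 'I_k.+1} := [ffun _ => ord0].
have f0 : feas c0.
  apply/forallP => S; apply/implyP => hS; rewrite big1 ?add0n ?gk // => i _.
  by rewrite ffunE.
case: (arg_maxnP (fun c : {ffun 'I_l -> 'I_k.+1} => \sum_i (c i : nat)) f0) => c fc cmax.
pose cn := fun i => (c i : nat).
have feasc : forall S, S != set0 -> \sum_(i in S) cn i + g S <= k.
  by move=> S hS; move/forallP: fc => /(_ S) /implyP; apply.
pose tight S := (S != set0) && (\sum_(i in S) cn i + g S == k).
have cover1 : forall i, exists S, tight S && (i \in S).
  move=> i; apply/existsP; apply: contraT; rewrite negb_exists => /forallP hn.
  have hi1 : cn i + g [set i] < k.
    have := feasc [set i] (set10 i); rewrite big_set1 leq_eqVlt => /orP [/eqP e|//].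
    by have := hn [set i]; rewrite /tight set11 andbT (set10 i) big_set1 e eqxx.
  pose c' : {ffun 'I_l -> 'I_k.+1} := [ffun j => if j == i then inord (cn i).+1 else c j].
  have c'E : forall j, (c' j : nat) = cn j + (j == i).
    move=> j; rewrite ffunE; case: eqP => [->|_]; last by rewrite addn0.
    rewrite inordK ?addn1 //; lia.
  have sum' : forall S : {set 'I_l}, \sum_(j in S) (c' j : nat) = \sum_(j in S) cn j + (i \in S).
    move=> S; under eq_bigr do rewrite c'E; rewrite big_split /=; congr addn.
    case: (boolP (i \in S)) => hiS.
      by rewrite (bigD1 i) //= eqxx big1 // => j /andP [_ /negbTE ->].
    by rewrite big1 // => j hj; case: eqP hj hiS => // -> ->.
  have fc' : feas c'.
    apply/forallP => S; apply/implyP => hS; rewrite sum'.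
    case: (boolP (i \in S)) => hiS; last by rewrite addn0 feasc.
    have := feasc S hS; have := hn S; rewrite /tight hS hiS /= andbT => ht.
    by rewrite addnAC addn1 => h; rewrite ltn_neqAle ht h.
  have e : forall f : 'I_l -> nat, \sum_(j in [set: 'I_l]) f j = \sum_j f j.
    by move=> f; apply: eq_bigl => j; rewrite inE.
  have h1 := sum' [set: 'I_l]; rewrite !e inE in h1.
  have := cmax c' fc'; rewrite /= h1.
  have -> : \sum_i (c i : nat) = \sum_i cn i by [].
  lia.
have tightU : forall S T, tight S -> tight T -> S :&: T != set0 -> tight (S :|: T).
  move=> S T /andP [hS /eqP tS] /andP [hT /eqP tT] hST.
  have hU : S :|: T != set0.
    by apply: contraNneq hS => e; apply/eqP/setP => x; move/setP: e => /(_ x); rewrite !inE; case: (x \in S).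
  rewrite /tight hU /=.
  have := feasc _ hU; have := feasc _ hST; have := gsup hST; have := sum_setUI cn S T.
  move=> e1 e2 e3 e4; rewrite eqn_leq e4 /=; move: e1 e2 e3 e4 tS tT.
  set a := \sum_(i in S :|: T) cn i; set b := \sum_(i in S :&: T) cn i.
  set a1 := \sum_(i in S) cn i; set a2 := \sum_(i in T) cn i; set g1 := g S; set g2 := g T; set g3 := g (S :|: T); set g4 := g (S :&: T); lia.
pose blk i := \bigcup_(S | tight S && (i \in S)) S.
have blkQ : forall i, (blk i == set0) || (tight (blk i) && (i \in blk i)).
  move=> i; apply: (big_ind (fun X => (X == set0) || (tight X && (i \in X)))).
  - by rewrite eqxx.
  - move=> X Y /orP [/eqP ->|/andP [tX iX]]; first by rewrite set0U.
    move=> /orP [/eqP ->|/andP [tY iY]]; first by rewrite setU0 tX iX orbT.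
    rewrite tightU // ?inE ?iX //; first by rewrite orbT.
    by apply/set0Pn; exists i; rewrite inE iX iY.
  - by move=> S ->; rewrite orbT.
have blkT : forall i, tight (blk i) && (i \in blk i).
  move=> i; have [S /andP [tS iS]] := cover1 i.
  have : S \subset blk i by apply: (bigcup_sup S); rewrite tS iS.
  move=> sub; have := blkQ i; case: eqP => [e|]; last by [].
  by move: (subsetP sub i iS); rewrite e inE.
have blkM : forall i S, tight S -> i \in S -> S \subset blk i.
  by move=> i S tS iS; apply: (bigcup_sup S); rewrite tS iS.
have blkE : forall i j, j \in blk i -> blk i = blk j.
  move=> i j hj; have /andP [ti ii] := blkT i; have /andP [tj jj] := blkT j.
  apply/eqP; rewrite eqEsubset blkM //=.
  have tU : tight (blk i :|: blk j).
    by apply: tightU => //; apply/set0Pn; exists j; rewrite inE hj jj.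
  by apply: subset_trans (subsetUr (blk i) _) (blkM _ _ tU _); rewrite inE ii.
pose R := fun i j => j \in blk i.
have eqR : {in [set: 'I_l] & &, equivalence_rel R}.
  move=> x y z _ _ _; split; first by have /andP [] := blkT z.
  by move=> hxy; rewrite /R (blkE _ _ hxy).
exists cn, (equivalence_partition R [set: 'I_l]); split => //.
  exact: equivalence_partitionP.
move=> B /imsetP [x _ ->].
have -> : [set y in [set: 'I_l] | R x y] = blk x by apply/setP => y; rewrite !inE.
by have /andP [/andP [_ /eqP ->] _] := blkT x.
Qed.
End Comb.

Lemma seq_of_counts (l : nat) (c : 'I_l -> nat) :
  exists L : seq 'I_l, (forall x, count_mem x L = c x) /\ size L = \sum_i c i.
Proof.
exists (flatten [seq nseq (c i) i | i <- enum 'I_l]); split.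
  move=> x; rewrite count_flatten -map_comp sumnE big_map.
  rewrite (eq_bigr (fun i => (i == x) * c i)); last first.
    by move=> i _; rewrite /= count_nseq /= eq_sym.
  rewrite big_enum /= (bigD1 x) //= eqxx mul1n big1 ?addn0 // => i /negbTE ->.
  by rewrite mul0n.
rewrite size_flatten /shape -map_comp sumnE big_map big_enum /=.
by apply: eq_bigr => i _; rewrite /= size_nseq.
Qed.

Lemma count_ord (T : eqType) (k : nat) (s : seq T) (x0 x : T) : size s <= k ->
  count_mem x s = \sum_(j < k | (j < size s) && (nth x0 s j == x)) 1.
Proof.
move=> hs; rewrite -sum1_count (big_nth x0) (big_nat_widen _ _ _ _ _ hs) big_mkord.
by apply: eq_bigl => j; rewrite andbC.
Qed.

Import Order.TTheory GRing.Theory Num.Theory.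
Local Open Scope ring_scope.

Section L.
Variables (K : finFieldType) (F : fieldType) (iota : {rmorphism K -> F}).
Variables (n k : nat) (hkn : (k <= n)%N).

Lemma mrd_unit (G : 'M[F]_(k, n)) : MRD iota G -> row_free G ->
  forall B : 'M[K]_(k, n), row_free B -> (G *m (map_mx iota B)^T) \in unitmx.
Proof.
move=> hM hG B hB; rewrite -row_free_unit; apply: contraT => hnf.
have hker : kermx (G *m (map_mx iota B)^T) != 0 by rewrite kermx_eq0.
set u := nz_row (kermx (G *m (map_mx iota B)^T)).
have u0 : u != 0 by rewrite nz_row_eq0.
have uA : u *m (G *m (map_mx iota B)^T) = 0 by apply/sub_kermxP; exact: nz_row_sub.
have c0 : u *m G != 0 by rewrite mulmx_free_eq0.
have [S [hS hind]] := hM u c0.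
set P : 'M[K]_(n, #|~: S|) := \matrix_(i, t) (i == enum_val t)%:R.
have rP : (\rank (B *m P) < k)%N.
  apply: leq_ltn_trans (mxrankM_maxr _ _) _.
  apply: leq_ltn_trans (rank_leq_col _) _.
  have := cardsC S; rewrite card_ord => hc.
  move: hS hc hkn; lia.
have hk0 : kermx (B *m P) != 0.
  by rewrite kermx_eq0 /row_free; apply: contraTN rP => /eqP ->; rewrite ltnn.
set y := nz_row (kermx (B *m P)).
have y0 : y != 0 by rewrite nz_row_eq0.
have yA : y *m (B *m P) = 0 by apply/sub_kermxP; exact: nz_row_sub.
set a := y *m B.
have a0 : a != 0 by rewrite mulmx_free_eq0.
have aout : forall j, j \notin S -> a 0 j = 0.
  move=> j hj; have hj' : j \in ~: S by rewrite in_setC.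
  move/rowP: yA => /(_ (enum_rank_in hj' j)).
  rewrite mulmxA -/a mxE (bigD1 j) //= big1 ?addr0.
    by rewrite /P !mxE enum_rankK_in // eqxx mulr1 -/a.
  by move=> i hi; rewrite /P !mxE enum_rankK_in // (negbTE hi) mulr0.
have ca : (u *m G) *m (map_mx iota a)^T = 0.
  by rewrite /a map_mxM trmx_mul mulmxA -(mulmxA u) uA mul0mx.
have hsum : \sum_(i in S) iota (a 0 i) * (u *m G) 0 i = 0.
  move/matrixP: ca => /(_ 0 0); rewrite !mxE => hca; apply: etrans _ hca.
  rewrite [RHS](bigID (fun i => i \in S)) /= [X in _ = _ + X]big1 ?addr0.
    by apply: eq_bigr => i _; rewrite !mxE mulrC.
  by move=> i hi; rewrite [_^T _ _]mxE [map_mx _ _ _ _]mxE aout // rmorph0 mulr0.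
have := hind (fun i => a 0 i) hsum => hz.
suff : a == 0 by rewrite (negbTE a0).
apply/eqP/rowP => j; rewrite [RHS]mxE.
by case: (boolP (j \in S)) => hj; [exact: hz | exact: aout].
Qed.

Lemma ext_basis (W : 'M[K]_n) : (\rank W <= k)%N ->
  exists B : 'M[K]_(k, n), row_free B /\ (W <= B)%MS.
Proof.
move=> hW; exists ((pid_mx k : 'M_(k, n)) *m row_ebase W); split.
  by rewrite /row_free mxrankMfree ?row_free_unit ?row_ebase_unit // rank_pid_mx.
rewrite -{1}(mulmx_ebase W).
have -> : (pid_mx (\rank W) : 'M[K]_n) = (pid_mx (\rank W) : 'M[K]_(n, k)) *m (pid_mx k : 'M[K]_(k, n)).
  by rewrite mul_pid_mx; congr pid_mx; lia.
by rewrite !mulmxA -(mulmxA _ (pid_mx k)) submxMl.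
Qed.

Lemma GV_rank (G : 'M[F]_(k, n)) : MRD iota G -> row_free G ->
  forall W : 'M[K]_n, (\rank W <= k)%N -> \rank (GV iota G W) = \rank W.
Proof.
move=> hM hG W hW; have [B [hB sWB]] := ext_basis hW.
have [X ->] := submxP sWB.
rewrite /GV map_mxM -mulmxA mxrankMfree ?mxrank_map ?mxrankMfree //.
rewrite row_free_unit -unitmx_tr trmx_mul trmxK; exact: mrd_unit.
Qed.

Lemma GV_mono (G : 'M[F]_(k, n)) (W W' : 'M[K]_n) :
  (W <= W')%MS -> (GV iota G W <= GV iota G W')%MS.
Proof. by case/submxP => X ->; rewrite /GV map_mxM -mulmxA submxMl. Qed.
Lemma bigcap_rank_seq (T : Type) (s : seq T) (Y : T -> 'M[F]_k) :
  (\sum_(x <- s) (\rank (Y x))%:Z - ((size s)%:Z - 1) * k%:Z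
    <= (\rank (\bigcap_(x <- s) Y x)%MS)%:Z).
Proof.
elim: s => [|x s IH].
  by rewrite !big_nil mxrank1 /= sub0r mulN1r opprK.
rewrite !big_cons /=.
have h1 := mxrank_sum_cap (Y x) (\bigcap_(x <- s) Y x)%MS.
have h2 := rank_leq_col (Y x + \bigcap_(x <- s) Y x)%MS.
move: IH h1 h2.
set a := \rank (Y x); set b := \rank _; set c := \rank (_ :&: _)%MS; set d := \rank (_ + _)%MS.
set S := \sum_(_ <- _) _.
move=> IH h1 h2.
have : (S - ((size s)%:Z - 1) * k%:Z <= b%:Z) by [].
rewrite -[(size s).+1]addn1.
lia.
Qed.

Lemma lower_bound (l : nat) (G : 'M[F]_(k, n)) (hM : MRD iota G) (hG : row_free G)
  (V : 'I_l -> 'M[K]_n) (hV : forall i, (\rank (V i) <= k)%N)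
  (P : {set {set 'I_l}}) (hP : partition P [set: 'I_l]) :
  partition_value k V P <= (\rank (\bigcap_(i < l) <<GV iota G (V i)>>)%MS)%:Z.
Proof.
set Y := fun B : {set 'I_l} => (\bigcap_(i in B) <<GV iota G (V i)>>)%MS.
case/and3P: (hP) => /eqP hcov htriv h0.
have hY : forall B, B \in P -> (\rank (\bigcap_(j in B) V j)%MS <= \rank (Y B))%N.
  move=> B hB; have : B != set0 by apply: contraNneq h0 => <-.
  case/set0Pn => i hi.
  have hgk : (\rank (\bigcap_(j in B) V j)%MS <= k)%N.
    exact: leq_trans (mxrankS (bigcapmx_inf i hi (submx_refl _))) (hV i).
  rewrite -(GV_rank hM hG hgk); apply: mxrankS; apply/sub_bigcapmxP => j hj.
  by rewrite genmxE; apply: GV_mono; have := bigcapmx_inf j hj (submx_refl (V j)).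
have hcap : (\bigcap_(B in P) Y B <= \bigcap_(i < l) <<GV iota G (V i)>>)%MS.
  apply/sub_bigcapmxP => i _.
  have : i \in cover P by rewrite hcov inE.
  case/bigcupP => B hB hiB; apply: (submx_trans (bigcapmx_inf B hB (submx_refl (Y B)))).
  exact: (@bigcapmx_inf _ _ i _ _ _ (fun j => <<GV iota G (V j)>>%MS) _ hiB (submx_refl _)).
have hs := bigcap_rank_seq (enum P) Y.
rewrite !big_enum /= -cardE in hs.
apply: le_trans (_ : _ <= (\rank (\bigcap_(B in P) Y B)%MS)%:Z) _; last first.
  by rewrite lez_nat; apply: mxrankS.
apply: le_trans hs; rewrite /partition_value lerD2r.
by apply: ler_sum => B hB; rewrite lez_nat; apply: hY.
Qed.

Lemma row_pid_mul (m : nat) (M : 'M[F]_k) (j : 'I_k) :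
  row j ((pid_mx m : 'M[F]_k) *m M) = if (j < m)%N then row j M else 0.
Proof.
apply/rowP => t; rewrite !mxE (bigD1 j) //= big1 ?addr0.
  rewrite mxE eqxx /=; case: (j < m)%N; by rewrite ?mul1r ?mul0r !mxE.
move=> i hi; rewrite mxE; case: eqP => [e|_] /=; last by rewrite mul0r.
by case/negP: hi; apply/eqP/val_inj.
Qed.

Lemma upper (l : nat) (hl : (0 < l)%N) (G : 'M[F]_(k, n)) (hGKP : GKP iota l G)
  (V : 'I_l -> 'M[K]_n) (c : 'I_l -> nat)
  (hc : forall S : {set 'I_l}, S != set0 ->
     (\sum_(i in S) c i + \rank (\bigcap_(j in S) V j)%MS <= k)%N) :
  (\rank (\bigcap_(i < l) <<GV iota G (V i)>>)%MS + minn k (\sum_i c i) <= k)%N.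
Proof.
pose i0 := Ordinal hl.
have [L [cntL szL]] := seq_of_counts c.
pose L' := take k L.
pose m := size L'.
have hm : m = minn k (\sum_i c i) by rewrite /m size_take_min szL.
have mk : (m <= k)%N by rewrite hm geq_minl.
have cntL' : forall x, (count_mem x L' <= c x)%N.
  by move=> x; rewrite -cntL -[in X in (_ <= X)%N](cat_take_drop k L) count_cat leq_addr.
pose sg := fun j : 'I_k => nth i0 L' j.
pose W := fun j : 'I_k => if (j < m)%N then V (sg j) else 0.
have fib : forall (Om : {set 'I_k}) x, (forall j, j \in Om -> j < m)%N ->
    (\sum_(j in Om | sg j == x) 1 <= c x)%N.
  move=> Om x hO; apply: leq_trans (cntL' x); rewrite (count_ord i0 x mk).
  rewrite [X in (_ <= X)%N]big_mkcond [X in (X <= _)%N]big_mkcond /=.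
  apply: leq_sum => j _; case: (boolP (j \in Om)) => //= jO.
  by rewrite (hO j jO) /sg; case: (_ == _).
have gen : generic_pattern W.
  move=> Om hOm.
  have [hall|hnot] := boolP [forall j, (j \in Om) ==> (j < m)%N].
    have hO : forall j, j \in Om -> (j < m)%N by move=> j jO; move/forallP: hall => /(_ j) /implyP; apply.
    pose S := [set sg j | j in Om].
    have hS : S != set0.
      by case/set0Pn: hOm => j jO; apply/set0Pn; exists (sg j); apply: imset_f.
    have r1 : (\rank (\bigcap_(j in Om) W j)%MS <= \rank (\bigcap_(x in S) V x)%MS)%N.
      apply: mxrankS; apply/sub_bigcapmxP => x /imsetP [j jO ->].
      have := @bigcapmx_inf _ _ j _ _ _ W (V (sg j)) jO.
      by rewrite /W (hO j jO); apply; apply: submx_refl.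
    have r2 := hc S hS.
    have r3 : (#|Om| <= \sum_(x in S) c x)%N.
      rewrite -sum1_card (partition_big sg (mem S)) /=; last first.
        by move=> j jO; apply: imset_f.
      by apply: leq_sum => x _; apply: fib.
    move: r1 r2 r3; set a := \rank _; set b := \rank _; set s := \sum_(_ in S) _.
    move=> r1 r2 r3; lia.
  move: hnot; rewrite negb_forall => /existsP [j]; rewrite negb_imply => /andP [jO jm].
  have : (\rank (\bigcap_(j in Om) W j)%MS <= \rank (W j))%N.
    by apply: mxrankS; have := @bigcapmx_inf _ _ j _ _ _ W (W j) jO; apply; apply: submx_refl.
  by rewrite /W (negbTE jm) mxrank0 leqn0 => /eqP ->.
have ord : (pattern_order W <= l)%N.
  rewrite /pattern_order.
  apply: leq_trans (_ : #|[set <<V x>>%MS | x in [set: 'I_l]]| <= l)%N.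
    apply: subset_leq_card; apply/subsetP => X /imsetP [j]; rewrite inE => hj ->.
    have jm : (j < m)%N by move: hj; rewrite /W; case: (j < m)%N => //; rewrite eqxx.
    by apply/imsetP; exists (sg j); rewrite ?inE // /W jm.
  by apply: leq_trans (leq_imset_card _ _) _; rewrite cardsT card_ord.
have [M [hMu hMrow]] := hGKP.2 W gen ord.
set D := (\bigcap_(i < l) <<GV iota G (V i)>>)%MS.
have rowD : forall j : 'I_k, (j < m)%N -> row j M *m D^T = 0.
  move=> j jm.
  have : (D <= <<GV iota G (V (sg j))>>)%MS.
    by have := @bigcapmx_inf _ _ (sg j) xpredT _ _ (fun i => <<GV iota G (V i)>>%MS) _ isT; apply; apply: submx_refl.
  rewrite genmxE => /submxP [X ->].
  have := hMrow j; rewrite /W jm => h.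
  by rewrite /GV !trmx_mul trmxK !mulmxA h mul0mx.
have hA : ((pid_mx m : 'M[F]_k) *m M) *m D^T = 0.
  apply/row_matrixP => j; rewrite row_mul row0 row_pid_mul.
  by case: (boolP (j < m)%N) => jm; [exact: rowD | rewrite mul0mx].
have := mulmx0_rank_max hA.
by rewrite mxrankMfree ?row_free_unit // rank_pid_mx // mxrank_tr addnC hm.
Qed.
End L.

Unset Implicit Arguments.

Theorem mainTheorem15 (K : finFieldType) (F : fieldType)
  (iota : {rmorphism K -> F}) (n k l : nat)
  (hk : (1 <= k)%N) (hkn : (k <= n)%N) (hl : (1 <= l)%N)
  (G : 'M[F]_(k, n)) (hG : row_free G) (hGKP : GKP iota l G)
  (V : 'I_l -> 'M[K]_n) (hV : forall i, (\rank (V i) <= k)%N) :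
  (exists P : {set {set 'I_l}}, partition P [set: 'I_l] /\
     (\rank (\bigcap_(i < l) <<GV iota G (V i)>>)%MS)%:Z = partition_value k V P)
  /\
  (forall P : {set {set 'I_l}}, partition P [set: 'I_l] ->
     partition_value k V P <= (\rank (\bigcap_(i < l) <<GV iota G (V i)>>)%MS)%:Z).
Proof.
have hM := hGKP.1.
split; last by move=> Q hQ; exact: lower_bound.
pose g := fun S : {set 'I_l} => \rank (\bigcap_(j in S) V j)%MS.
have gk : forall S, S != set0 -> (g S <= k)%N.
  move=> S /set0Pn [i hi].
  exact: leq_trans (mxrankS (bigcapmx_inf i hi (submx_refl _))) (hV i).
have gsup : forall S T, S :&: T != set0 -> (g S + g T <= g (S :|: T) + g (S :&: T))%N.
  move=> S T _; rewrite /g -mxrank_sum_cap addnC leq_add //; apply: mxrankS.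
    apply/sub_bigcapmxP => j; rewrite inE => /orP [jS|jT].
      apply: submx_trans (capmxSl _ _) _.
      by have := @bigcapmx_inf _ _ j _ _ _ V (V j) jS; apply; apply: submx_refl.
    apply: submx_trans (capmxSr _ _) _.
    by have := @bigcapmx_inf _ _ j _ _ _ V (V j) jT; apply; apply: submx_refl.
  apply/sub_bigcapmxP => j; rewrite inE => /andP [jS jT]; rewrite addsmx_sub.
  apply/andP; split.
    by have := @bigcapmx_inf _ _ j _ _ _ V (V j) jS; apply; apply: submx_refl.
  by have := @bigcapmx_inf _ _ j _ _ _ V (V j) jT; apply; apply: submx_refl.
have [c [P [hP hfeas htight]]] := comb gk gsup.
have hup := upper hkn hl hGKP hfeas.
have hlow := lower_bound hkn hM hG hV hP.
set d := \rank _ in hup hlow *.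
set N := (\sum_i c i)%N in hup.
have sumc : N = (\sum_(B in P) \sum_(i in B) c i)%N.
  rewrite -(set_partition_big _ hP) /N; apply: eq_bigl => i; by rewrite inE.
have sumP : (\sum_(B in P) (\sum_(i in B) c i + g B))%N = (#|P| * k)%N.
  by rewrite (eq_bigr (fun _ => k)) ?sum_nat_const // => B hB; apply: htight.
have sumg : (\sum_(B in P) (g B)%:Z) = (\sum_(B in P) g B)%N%:Z.
  by rewrite (big_morph Posz PoszD (erefl _)).
have hval : partition_value k V P = (\sum_(B in P) g B)%N%:Z - (#|P|%:Z - 1) * k%:Z.
  by rewrite /partition_value -sumg.
rewrite big_split /= -sumc in sumP.
case: (leqP N k) => hNk.
  exists P; split => //.
  rewrite (minn_idPr hNk) in hup.
  move: hlow; rewrite hval; move: sumP; set sg := (\sum_(B in P) g B)%N; set cp := #|P|; lia.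
have d0 : d = 0%N by move: hup; rewrite (minn_idPl (ltnW hNk)); lia.
have hT : [set: 'I_l] != set0 by apply/set0Pn; exists (Ordinal hl).
have hP1 : partition [set [set: 'I_l]] [set: 'I_l].
  by rewrite /partition cover1 trivIset1 eqxx /= in_set1 eq_sym.
exists [set [set: 'I_l]]; split => //.
have := lower_bound hkn hM hG hV hP1; rewrite -/d d0.
rewrite /partition_value big_set1 cards1 subrr mul0r subr0 => h.
by apply/eqP; rewrite eq_le h lez_nat leq0n.
Qed.
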